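(* No deterministic strategyproof mechanism for locating an obnoxious facility on $[0,1]$ has an approximation ratio better than $(2^p+1)^{1/p}$ for the $L_p$ social cost, for any $1\le p<\infty$. No deterministic strategyproof mechanism has an approximation ratio better than $2$ for the $L_\infty$ social cost.
   Context: Agents $i=1,\dots,n$ have private locations $x_i\in[0,1]$; a deterministic mechanism $f:[0,1]^n\to[0,1]$ outputs the facility location. Agent cost $c(x_i,y)=1-|x_i-y|$ (equivalently utility $|x_i-y|$). $f$ is strategyproof if for all $\mathbf x$, $i$, $x_i'$: $|x_i-f(\mathbf x)|\ge|x_i-f(x_i',\mathbf x_{-i})|$. $L_p$ social cost $\mathrm{sc}_p(y,\mathbf x)=(\sum_ic(x_i,y)^p)^{1/p}$, $\mathrm{sc}_\infty(y,\mathbf x)=\max_ic(x_i,y)$. $f$ has approximation ratio $\alpha$ if $\mathrm{sc}_p(f(\mathbf x),\mathbf x)\le\alpha\min_{z\in[0,1]}\mathrm{sc}_p(z,\mathbf x)$ for all profiles (over all numbers of agents). *)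

(* Defs.v *)
From HB Require Import structures.
From mathcomp Require Import all_boot all_order all_algebra.
From mathcomp Require Import all_classical all_reals all_analysis.
Set Implicit Arguments. Unset Strict Implicit. Unset Printing Implicit Defensive.
Import Order.TTheory GRing.Theory Num.Theory.
Local Open Scope ring_scope.

(* A deterministic mechanism: for every number n of agents, a map from
   location profiles ('I_n -> R) to a facility location. Only profiles in
   [0,1]^n matter. *)
Definition mechanism (R : realType) := forall n : nat, ('I_n -> R) -> R.

Definition in01 (R : realType) (y : R) : Prop := 0 <= y <= 1.

Definition profile01 (R : realType) (n : nat) (x : 'I_n -> R) : Prop :=
  forall i, in01 (x i).

Definition valid_mech (R : realType) (f : mechanism R) : Prop :=
  forall n (x : 'I_n -> R), profile01 x -> in01 (f n x).

Definition upd (R : realType) (n : nat) (x : 'I_n -> R) (i : 'I_n) (y : R)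
  : 'I_n -> R := fun j => if j == i then y else x j.

Definition strategyproof (R : realType) (f : mechanism R) : Prop :=
  forall n (x : 'I_n -> R) (i : 'I_n) (x' : R),
    profile01 x -> in01 x' ->
    `|x i - f n (upd x i x')| <= `|x i - f n x|.

Definition cost (R : realType) (xi y : R) : R := 1 - `|xi - y|.

Definition sc_p (R : realType) (p : R) (n : nat) (y : R) (x : 'I_n -> R) : R :=
  (\sum_(i < n) (cost (x i) y) `^ p) `^ p^-1.

Definition sc_inf (R : realType) (n : nat) (y : R) (x : 'I_n -> R) : R :=
  \big[Num.max/0]_(i < n) cost (x i) y.

(* approximation ratio alpha (for all numbers of agents, all profiles):
   sc(f x, x) <= alpha * min_{z in [0,1]} sc(z, x), written pointwise in z *)
Definition approx_ratio (R : realType) (sc : forall n, R -> ('I_n -> R) -> R)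
  (f : mechanism R) (alpha : R) : Prop :=
  forall n (x : 'I_n -> R), profile01 x ->
    forall z, in01 z -> sc n (f n x) x <= alpha * sc n z x.

(* Main.v *)
Require Import Defs.
From HB Require Import structures.
From mathcomp Require Import all_boot all_order all_algebra.
From mathcomp Require Import all_classical all_reals all_analysis.
From mathcomp Require Import lra ring.
Import Order.TTheory GRing.Theory Num.Theory.
Local Open Scope ring_scope.
Set Implicit Arguments. Unset Strict Implicit.

Section Core.
Variable R : realType.

Lemma absE (x : R) : (0 <= x /\ `|x| = x) \/ (x < 0 /\ `|x| = - x).
Proof.
case: (lerP 0 x) => h; [left; split => //; exact: ger0_norm
  | right; split => //; exact: ltr0_norm].
Qed.

Lemma cost_ge0 (a y : R) : in01 a -> in01 y -> 0 <= cost a y.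
Proof.
move=> /andP[a0 a1] /andP[y0 y1]; rewrite /cost subr_ge0.
by case: (absE (a - y)) => [[h ->]|[h ->]]; lra.
Qed.

Lemma core (F : R -> R -> R) (Phi : R -> R -> R) (alpha : R) :
  (forall a b, in01 a -> in01 b -> in01 (F a b)) ->
  (forall a a' b, in01 a -> in01 a' -> in01 b -> `|a - F a' b| <= `|a - F a b|) ->
  (forall a b b', in01 a -> in01 b -> in01 b' -> `|b - F a b'| <= `|b - F a b|) ->
  (forall a b z, in01 a -> in01 b -> in01 z ->
     Phi (cost a (F a b)) (cost b (F a b)) <= alpha * Phi (cost a z) (cost b z)) ->
  (forall a b, 0 <= a -> 0 <= b -> Phi a b = Phi b a) ->
  (forall a b a' b', 0 <= a -> a <= a' -> 0 <= b -> b <= b' -> Phi a b <= Phi a' b') ->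
  (forall l a b, 0 <= l -> 0 <= a -> 0 <= b -> Phi (l * a) (l * b) = l * Phi a b) ->
  (forall a b, 0 <= a -> 0 <= b -> Phi a b <= 0 -> a = 0) ->
  Phi 1 (1/2) <= alpha * Phi 0 (1/2).
Proof.
move=> V S1 S2 A Psym Pmono Phom Pzero.
have i0 : in01 (0:R) by rewrite /in01; apply/andP; lra.
have i1 : in01 (1:R) by rewrite /in01; apply/andP; lra.
have inE (t : R) : in01 t -> 0 <= t /\ t <= 1 by move/andP.
have Hz0 : Phi 0 0 = 0.
  by have := Phom 0 0 0 (lexx _) (lexx _) (lexx _); rewrite !mul0r.
have F00 : F 0 0 = 1.
  have c01 : cost 0 1 = 0 :> R by rewrite /cost sub0r normrN normr1 subrr.
  have := A 0 0 1 i0 i0 i1; rewrite c01 Hz0 mulr0.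
  move/(Pzero _ _ _ _).
  have [h1 h2] := inE _ (V 0 0 i0 i0).
  rewrite /cost sub0r normrN ger0_norm // => H.
  have := H ltac:(lra) ltac:(lra); lra.
have F11 : F 1 1 = 0.
  have c10 : cost 1 0 = 0 :> R by rewrite /cost subr0 normr1 subrr.
  have := A 1 1 0 i1 i1 i0; rewrite c10 Hz0 mulr0.
  move/(Pzero _ _ _ _).
  have [h1 h2] := inE _ (V 1 1 i1 i1).
  rewrite /cost ger0_norm ?subr_ge0 // => H.
  have := H ltac:(lra) ltac:(lra); lra.
set P1 := Phi 1 (1/2); set P0 := Phi 0 (1/2).
have key : forall e : R, 0 < e -> e < 1/4 -> (1 - 2*e) * P1 <= (1 + 2*e) * (alpha * P0).
  move=> e e0 e1.
  set u := 1/2 + e; set v := 1/2 - e.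
  have iu : in01 u by rewrite /in01 /u; apply/andP; lra.
  have iv : in01 v by rewrite /in01 /v; apply/andP; lra.
  have bad : forall c1 c2 : R, 2 * v <= c1 -> v <= c2 ->
     Phi c1 c2 <= alpha * Phi 0 u -> (1 - 2*e) * P1 <= (1 + 2*e) * (alpha * P0).
    move=> c1 c2 h1 h2 h.
    have hv : 0 <= v by rewrite /v; lra.
    have := Pmono (2*v) v c1 c2 ltac:(lra) h1 hv h2.
    have -> : 2 * v = (1 - 2*e) * 1 by rewrite /v; lra.
    have -> : v = (1 - 2*e) * (1/2) by rewrite /v; lra.
    rewrite Phom; [|lra|lra|lra].
    have hu : Phi 0 u = (1 + 2*e) * P0.
      by rewrite /P0 -Phom; [congr Phi; rewrite /u; lra|lra|lra|lra].
    rewrite -/P1 => h3; apply: (le_trans h3).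
    by rewrite mulrCA -hu.
  have [X0 X1] := inE _ (V u 0 iu i0).
  have SX := S1 u 0 0 iu i0 i0; rewrite F00 in SX.
  have HX : F u 0 = 1 \/ F u 0 <= 2 * e.
    move: SX; case: (absE (u - 1)) => [[h ->]|[h ->]];
    case: (absE (u - F u 0)) => [[h' ->]|[h' ->]]; rewrite /u in h h' *; lra.
  case: HX => [HX|HX].
  2:{ apply: (bad (cost 0 (F u 0)) (cost u (F u 0))).
      - rewrite /cost sub0r normrN ger0_norm //; rewrite /v; lra.
      - rewrite /cost ger0_norm; rewrite /u /v in X0 X1 HX *; lra.
      - have := A u 0 1 iu i0 i1.
        have cu1 : cost u 1 = u by rewrite /cost ler0_norm /u; lra.
        have c01 : cost 0 1 = 0 :> R by rewrite /cost sub0r normrN normr1 subrr.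
        have g1 := cost_ge0 iu (V u 0 iu i0); have g2 := cost_ge0 i0 (V u 0 iu i0).
        rewrite cu1 c01 Psym //.
        by rewrite [Phi u 0]Psym //; rewrite /u; lra. }
  have [Y0 Y1] := inE _ (V 1 v i1 iv).
  have SY := S2 1 v 1 i1 iv i1; rewrite F11 in SY.
  have HY : F 1 v = 0 \/ 1 - 2 * e <= F 1 v.
    move: SY; rewrite subr0.
    case: (absE v) => [[h ->]|[h ->]];
    case: (absE (v - F 1 v)) => [[h' ->]|[h' ->]]; rewrite /v in h h' *; lra.
  case: HY => [HY|HY].
  2:{ apply: (bad (cost 1 (F 1 v)) (cost v (F 1 v))).
      - rewrite /cost ger0_norm; rewrite /v; lra.
      - rewrite /cost ler0_norm; rewrite /v in Y0 Y1 HY *; lra.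
      - have := A 1 v 0 i1 iv i0.
        have c10 : cost 1 0 = 0 :> R by rewrite /cost subr0 normr1 subrr.
        have cv0 : cost v 0 = u by rewrite /cost subr0 ger0_norm /u /v; lra.
        by rewrite c10 cv0. }
  have [Z0 Z1] := inE _ (V u v iu iv).
  have SZ := S2 u v 0 iu iv i0; rewrite HX in SZ.
  have SZ' := S1 u 1 v iu i1 iv; rewrite HY in SZ'.
  move: SZ SZ'; rewrite subr0.
  case: (absE (v - 1)) => [[h ->]|[h ->]];
  case: (absE (v - F u v)) => [[h' ->]|[h' ->]];
  case: (absE u) => [[h2 ->]|[h2 ->]];
  case: (absE (u - F u v)) => [[h3 ->]|[h3 ->]]; rewrite /u /v in h h' h2 h3 *; lra.
rewrite leNgt; apply/negP => hlt.
set d := P1 - alpha * P0; set s := P1 + alpha * P0.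
have d0 : 0 < d by rewrite /d; lra.
set k := `|s| + d + 1.
have k0 : 0 < k by rewrite /k; have := normr_ge0 s; lra.
set e := d / (4 * k).
have ek : e * (4 * k) = d by rewrite /e mulfVK //; apply: lt0r_neq0; lra.
have e0 : 0 < e by rewrite /e divr_gt0 //; lra.
have e1 : e < 1/4.
  have : e * (4 * k) < 1/4 * (4 * k) by rewrite ek; rewrite /k; have := normr_ge0 s; lra.
  by rewrite ltr_pM2r //; lra.
have := key e e0 e1.
have ss : s <= `|s| := ler_norm s.
have hk : `|s| < 2 * k by rewrite /k; have := normr_ge0 s; lra.
move=> H.
have H2 : d <= 2 * e * s by rewrite /d /s; lra.
have H3 : 2 * k * d <= 2 * k * (2 * e * s) by rewrite ler_pM2l //; lra.
have H4 : 2 * k * (2 * e * s) = d * s by rewrite -ek; ring.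
have H5 : d * s <= d * `|s| by rewrite ler_pM2l.
have H6 : d * `|s| < d * (2 * k) by rewrite ltr_pM2l.
lra.
Qed.
End Core.

Section Main.
Variable R : realType.

Definition pr (a b : R) : 'I_2 -> R := fun j => if j == ord0 then a else b.

Lemma pr01 a b : in01 a -> in01 b -> profile01 (pr a b).
Proof. by move=> ha hb j; rewrite /pr; case: (j == ord0). Qed.

Lemma upd0 a b a' : upd (pr a b) ord0 a' = pr a' b.
Proof. by apply: funext => j; rewrite /upd /pr; case: (j == ord0). Qed.

Lemma upd1 a b b' : upd (pr a b) ord_max b' = pr a b'.
Proof. by apply: funext => -[[|[|k]] Hk]. Qed.

Lemma mech_core (sc : forall n, R -> ('I_n -> R) -> R) (Phi : R -> R -> R)
   (f : mechanism R) (alpha : R) :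
  valid_mech f -> strategyproof f -> approx_ratio sc f alpha ->
  (forall a b y, in01 a -> in01 b -> in01 y -> sc 2 y (pr a b) = Phi (cost a y) (cost b y)) ->
  (forall a b, 0 <= a -> 0 <= b -> Phi a b = Phi b a) ->
  (forall a b a' b', 0 <= a -> a <= a' -> 0 <= b -> b <= b' -> Phi a b <= Phi a' b') ->
  (forall l a b, 0 <= l -> 0 <= a -> 0 <= b -> Phi (l * a) (l * b) = l * Phi a b) ->
  (forall a b, 0 <= a -> 0 <= b -> Phi a b <= 0 -> a = 0) ->
  Phi 1 (1/2) <= alpha * Phi 0 (1/2).
Proof.
move=> V S A Hsc Psym Pmono Phom Pzero.
apply: (core (F := fun a b => f 2 (pr a b))) => //.
- by move=> a b ha hb; apply: V; apply: pr01.
- move=> a a' b ha ha' hb.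
  have := S 2 (pr a b) ord0 a' (pr01 ha hb) ha'.
  by rewrite upd0.
- move=> a b b' ha hb hb'.
  have := S 2 (pr a b) ord_max b' (pr01 ha hb) hb'.
  by rewrite upd1.
- move=> a b z ha hb hz.
  have := A 2 (pr a b) (pr01 ha hb) z hz.
  rewrite !Hsc //; apply: V; exact: pr01.
Qed.

End Main.

Section Inst.
Variable R : realType.

Definition Phip (p : R) (a b : R) := (a `^ p + b `^ p) `^ p^-1.
Definition Phii (a b : R) := Num.max a (Num.max b 0).

Lemma scp_pr p a b y : sc_p p y (pr a b) = Phip p (cost a y) (cost b y).
Proof. by rewrite /sc_p /Phip !big_ord_recl big_ord0 addr0. Qed.

Lemma sci_pr a b y : sc_inf y (pr a b) = Phii (cost a y) (cost b y).
Proof. by rewrite /sc_inf /Phii !big_ord_recl big_ord0. Qed.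

Lemma Phip_props (p : R) : 1 <= p ->
  [/\ (forall a b, 0 <= a -> 0 <= b -> Phip p a b = Phip p b a),
   (forall a b a' b', 0 <= a -> a <= a' -> 0 <= b -> b <= b' -> Phip p a b <= Phip p a' b'),
   (forall l a b, 0 <= l -> 0 <= a -> 0 <= b -> Phip p (l * a) (l * b) = l * Phip p a b) &
   (forall a b, 0 <= a -> 0 <= b -> Phip p a b <= 0 -> a = 0)].
Proof.
move=> p1; have p0 : 0 <= p by lra.
have pn0 : p != 0 by apply/negP => /eqP h; lra.
have pi0 : 0 <= p^-1 by rewrite invr_ge0.
split.
- by move=> a b _ _; rewrite /Phip addrC.
- move=> a b a' b' a0 aa b0 bb; rewrite /Phip.
  apply: ge0_ler_powR => //; rewrite ?nnegrE ?addr_ge0 ?powR_ge0 //.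
  apply: lerD; apply: ge0_ler_powR => //; rewrite nnegrE //; lra.
- move=> l a b l0 a0 b0; rewrite /Phip !powRM // -mulrDr.
  rewrite powRM; [|exact: powR_ge0|by rewrite addr_ge0 ?powR_ge0].
  by rewrite -powRrM mulfV // powRr1.
- move=> a b a0 b0; rewrite /Phip => h.
  have h0 : (a `^ p + b `^ p) `^ p^-1 = 0.
    by apply/eqP; rewrite eq_le h powR_ge0.
  have := powR_eq0_eq0 h0 => hs.
  have ha := powR_ge0 a p; have hb := powR_ge0 b p.
  have : a `^ p = 0 by lra.
  exact: powR_eq0_eq0.
Qed.

Lemma Phii_props :
  [/\ (forall a b, 0 <= a -> 0 <= b -> Phii a b = Phii b a),
   (forall a b a' b', 0 <= a -> a <= a' -> 0 <= b -> b <= b' -> Phii a b <= Phii a' b'),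
   (forall l a b, 0 <= l -> 0 <= a -> 0 <= b -> Phii (l * a) (l * b) = l * Phii a b) &
   (forall a b, 0 <= a -> 0 <= b -> Phii a b <= 0 -> a = 0)].
Proof.
have E a b : 0 <= b -> Phii a b = Num.max a b by move=> b0; rewrite /Phii (max_l b0).
split.
- by move=> a b a0 b0; rewrite !E // maxC.
- move=> a b a' b' a0 aa b0 bb; rewrite !E //; last lra.
  rewrite ge_max !le_max aa bb /= orbT //.
- move=> l a b l0 a0 b0; rewrite !E ?mulr_ge0 // maxr_pMr //.
- move=> a b a0 b0; rewrite E // ge_max => /andP[h _]; lra.
Qed.

End Inst.

Unset Implicit Arguments. Set Strict Implicit.

Theorem theorem11 (R : realType) :
  (forall (p : R), 1 <= p ->
     forall (f : mechanism R) (alpha : R),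
       valid_mech f -> strategyproof f ->
       approx_ratio (sc_p p) f alpha ->
       (2 `^ p + 1) `^ p^-1 <= alpha)
  /\
  (forall (f : mechanism R) (alpha : R),
       valid_mech f -> strategyproof f ->
       approx_ratio (@sc_inf R) f alpha ->
       2 <= alpha).
Proof.
have h2 : (0:R) <= 1/2 by lra.
have h22 : (0:R) <= 2 by lra.
have h12 : (1/2:R) <= 1 by lra.
have h21 : 2 * (1/2) = 1 :> R by lra.
split.
- move=> p p1 f alpha V S A.
  have [Ps Pm Ph Pz] := Phip_props p1.
  have H := mech_core V S A (fun a b y _ _ _ => scp_pr p a b y) Ps Pm Ph Pz.
  have pn0 : p != 0 by clear -p1; apply/negP => /eqP h; lra.
  have o : forall x : R, 1 `^ x = 1 by move=> x; rewrite powR1.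
  have E0 : Phip p 0 (1/2) = 1/2.
    have := Ph (1/2) 0 1 h2 (lexx 0) ler01; rewrite mulr0 mulr1 => ->.
    by rewrite /Phip powR0 // add0r o o mulr1.
  have E2 : (2 `^ p + 1) `^ p^-1 = 2 * Phip p 1 (1/2).
    have := Ph 2 1 (1/2) h22 ler01 h2.
    rewrite mulr1 h21 => <-.
    by rewrite /Phip o.
  rewrite E2; rewrite E0 in H.
  move: H; generalize (Phip p 1 (1/2)) => X H; clear -H; lra.
- move=> f alpha V S A.
  have [Ps Pm Ph Pz] := Phii_props R.
  have H := mech_core V S A (fun a b y _ _ _ => sci_pr a b y) Ps Pm Ph Pz.
  have E0 : Phii 0 (1/2 : R) = 1/2 by rewrite /Phii (max_l h2) (max_r h2).
  have E1 : Phii 1 (1/2 : R) = 1 by rewrite /Phii (max_l h2) (max_l h12).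
  rewrite E0 E1 in H; clear -H; lra.
Qed.
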